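(* Let $X$ be a real Banach space with $\operatorname{dens} X \geq \omega_2$. Suppose that $X$ has a fundamental biorthogonal system. Then $X$ does not contain overcomplete subsets.
   Context: A biorthogonal system in $X$ is a family $\{x_\alpha; f_\alpha\}_{\alpha\in\Gamma} \subseteq X \times X^*$ with $\langle f_\alpha, x_\beta\rangle = \delta_{\alpha,\beta}$ for all $\alpha,\beta\in\Gamma$; it is fundamental if $\overline{\operatorname{span}}\{x_\alpha\}_{\alpha\in\Gamma} = X$. $\operatorname{dens}$ denotes the density character. A subset $S$ of a Banach space $X$ with $|S| = \operatorname{dens} X$ is called overcomplete if every subset $\Lambda \subseteq S$ with $|\Lambda| = |S|$ is linearly dense in $X$. *)

(* Defs.v *)
From HB Require Import structures.
From mathcomp Require Import all_boot all_order all_algebra.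
From mathcomp Require Import all_classical all_reals all_analysis.
Set Implicit Arguments. Unset Strict Implicit. Unset Printing Implicit Defensive.
Import Order.TTheory GRing.Theory Num.Theory.
Import numFieldNormedType.Exports.
Local Open Scope classical_set_scope.
Local Open Scope ring_scope.
Local Open Scope card_scope.

Definition lspan (R : realType) (X : lmodType R) (A : set X) : set X :=
  [set x | exists (n : nat) (c : 'I_n -> R) (v : 'I_n -> X),
             (forall i, A (v i)) /\ x = \sum_(i < n) c i *: v i].

Definition linearly_dense (R : realType) (X : normedModType R) (A : set X) : Prop :=
  closure (lspan A) = setT.

Definition is_dual_elt (R : realType) (X : normedModType R) (f : X -> R) : Prop :=
  [/\ (forall u v : X, f (u + v) = f u + f v),
      (forall (a : R) (u : X), f (a *: u) = a * f u) &
      continuous f].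

Definition has_fundamental_biorthogonal_system (R : realType)
    (X : normedModType R) : Prop :=
  exists (Gamma : Type) (x : Gamma -> X) (f : Gamma -> X -> R),
    [/\ (forall a, is_dual_elt (f a)),
        (forall a b, f a (x b) = if `[< a = b >] then 1 else 0) &
        linearly_dense (range x)].

(* |A| <= aleph_1, aleph_1 being the least uncountable cardinal:
   |A| is at most every uncountable cardinality. *)
Definition card_le_aleph1 (T : Type) (A : set T) : Prop :=
  forall (U : Type) (B : set U), ~ countable B -> A #<= B.

(* dens X >= omega_2, i.e. dens X > aleph_1: no dense subset has cardinality <= aleph_1. *)
Definition dens_ge_omega2 (T : topologicalType) : Prop :=
  forall D : set T, dense D -> ~ card_le_aleph1 D.

(* |S| = dens X, dens X being the least cardinality of a dense subset. *)
Definition card_eq_dens (T : topologicalType) (S : set T) : Prop :=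
  (exists D : set T, dense D /\ S #= D) /\
  (forall D : set T, dense D -> S #<= D).

Definition overcomplete (R : realType) (X : normedModType R) (S : set X) : Prop :=
  card_eq_dens S /\
  (forall L : set X, L `<=` S -> L #= S -> linearly_dense L).

(* Main.v *)
Require Import Defs.
From mathcomp Require Import all_boot all_order all_algebra.
From mathcomp Require Import all_classical all_reals all_analysis.
From HB Require Import structures.
From mathcomp Require Import wochoice.
Set Implicit Arguments. Unset Strict Implicit. Unset Printing Implicit Defensive.
Import Order.TTheory GRing.Theory Num.Theory.
Import numFieldNormedType.Exports.
Local Open Scope classical_set_scope.
Local Open Scope card_scope.

Definition maps {T U} (A : set T) (B : set U) (f : T -> U) :=
  forall x, A x -> B (f x).
Definition injon {T U} (A : set T) (f : T -> U) :=
  forall x y, A x -> A y -> f x = f y -> x = y.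

Lemma le_of_fun T U (A : set T) (B : set U) (f : T -> U) :
  maps A B f -> injon A f -> A #<= B.
Proof.
move=> mf jf.
have [g] : $|{injfun A >-> B}|.
  apply/injfunPex; exists f; first by move=> x /mf.
  by move=> x y /set_mem Ax /set_mem Ay; apply: jf.
exact: inj_card_le g.
Qed.

Lemma fun_of_le T U (A : set T) (B : set U) (u0 : U) :
  A #<= B -> exists f : T -> U, maps A B f /\ injon A f.
Proof.
move=> /card_leP[g].
pose f x := if pselect (A x) is left h then val (g (exist _ x (mem_set h))) else u0.
exists f; split.
- move=> x Ax; rewrite /f; case: pselect => // h.
  exact: set_valP.
- move=> x y Ax Ay; rewrite /f; case: pselect => // hx; case: pselect => // hy.
  move=> /val_inj /(@inj _ _ _ g) => /(_ (in_setT _) (in_setT _)) [].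
  done.
Qed.

Lemma le_nonempty T U (A : set T) (B : set U) x : A #<= B -> A x -> exists u : U, B u.
Proof.
move=> /card_leP[g] Ax.
by exists (val (g (exist _ x (mem_set Ax)))); exact: set_valP.
Qed.

Lemma le_funP T U (A : set T) (B : set U) x : A #<= B -> A x ->
  exists f : T -> U, maps A B f /\ injon A f.
Proof.
move=> le Ax; have [u _] := le_nonempty le Ax; exact: fun_of_le u le.
Qed.

Lemma empty_or T (A : set T) : A = set0 \/ exists a, A a.
Proof.
case: (pselect (exists a, A a)) => [h|nA]; [by right|left].
by apply/seteqP; split => x // Ax; apply: nA; exists x.
Qed.

Definition pinj T U (A : set T) (B : set U) (G : set (T * U)) :=
  [/\ G `<=` A `*` B,
      (forall x y y', G (x, y) -> G (x, y') -> y = y') &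
      (forall x x' y, G (x, y) -> G (x', y) -> x = x')].

Lemma card_le_total T U (A : set T) (B : set U) : A #<= B \/ B #<= A.
Proof.
case: (empty_or A) => [->|[a0 Aa0]]; first by left; exact: card_ge0.
case: (empty_or B) => [->|[b0 Bb0]]; first by right; exact: card_ge0.
have := @Zorn_bigcup (T * U) (pinj A B); case.
  move=> F FP Ftot; split.
  - by move=> [x y] [G FG Gxy]; have [+ _ _] := FP _ FG; apply.
  - move=> x y y' [G1 FG1 G1xy] [G2 FG2 G2xy'].
    case: (Ftot _ _ FG1 FG2) => sub.
    + by have [_ H _] := FP _ FG2; apply: (H x); [apply: sub|].
    + by have [_ H _] := FP _ FG1; apply: (H x); [|apply: sub].
  - move=> x x' y [G1 FG1 G1xy] [G2 FG2 G2xy'].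
    case: (Ftot _ _ FG1 FG2) => sub.
    + by have [_ _ H] := FP _ FG2; apply: (H x x' y); [apply: sub|].
    + by have [_ _ H] := FP _ FG1; apply: (H x x' y); [|apply: sub].
move=> M [PM Mmax].
have [MAB Mf Mi] := PM.
case: (pselect (forall a, A a -> exists b, M (a, b))) => [hA|].
  left.
  pose f a := if pselect (exists b, M (a, b)) is left h then projT1 (cid h) else b0.
  have fM a : A a -> M (a, f a).
    move=> Aa; rewrite /f; case: pselect => [h|]; last by move: (hA a Aa).
    exact: (projT2 (cid h)).
  apply: (@le_of_fun _ _ _ _ f).
    by move=> a Aa; have [_ +] := MAB _ (fM a Aa).
  by move=> a a' Aa Aa' e; apply: (Mi a a' (f a)); [apply: fM|rewrite e; apply: fM].
move=> /existsNP[a /not_implyP[Aa na]].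
case: (pselect (forall b, B b -> exists a, M (a, b))) => [hB|].
  right.
  pose g b := if pselect (exists a, M (a, b)) is left h then projT1 (cid h) else a0.
  have gM b : B b -> M (g b, b).
    move=> Bb; rewrite /g; case: pselect => [h|]; last by move: (hB b Bb).
    exact: (projT2 (cid h)).
  apply: (@le_of_fun _ _ _ _ g).
    by move=> b Bb; have [+ _] := MAB _ (gM b Bb).
  by move=> b b' Bb Bb' e; apply: (Mf (g b) b b'); [apply: gM|rewrite e; apply: gM].
move=> /existsNP[b /not_implyP[Bb nb]].
exfalso; apply: (Mmax (M `|` [set (a, b)])).
  split; first by move=> ?; left.
  by move=> /(_ (a, b)) /(_ (or_intror erefl)) Mab; apply: na; exists b.
split.
- by move=> z [/MAB //|->].
- move=> x y y' [Mxy|e1] [Mxy'|e2].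
  + exact: Mf Mxy Mxy'.
  + by case: e2 => e _; exfalso; apply: na; rewrite -e; exists y.
  + by case: e1 => e _; exfalso; apply: na; rewrite -e; exists y'.
  + by case: e1 => _ ->; case: e2 => _ ->.
- move=> x x' y [Mxy|e1] [Mxy'|e2].
  + exact: Mi Mxy Mxy'.
  + by case: e2 => _ e; exfalso; apply: nb; rewrite -e; exists x.
  + by case: e1 => _ e; exfalso; apply: nb; rewrite -e; exists x'.
  + by case: e1 => -> _; case: e2 => -> _.
Qed.

Definition DG T (G : set ((T * T) * T)) : set T := [set x | exists z, G ((x, x), z)].

Definition PH T (A : set T) (G : set ((T * T) * T)) :=
  [/\ DG G `<=` A, G `<=` (DG G `*` DG G) `*` DG G,
      (forall p z z', G (p, z) -> G (p, z') -> z = z'),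
      (forall p p' z, G (p, z) -> G (p', z) -> p = p') &
      (forall x y, DG G x -> DG G y -> exists z, G ((x, y), z)) /\
      (G = set0 \/ [set: nat] #<= DG G)].

Lemma DG_mono T (G1 G2 : set ((T * T) * T)) : G1 `<=` G2 -> DG G1 `<=` DG G2.
Proof. by move=> s x [z Gz]; exists z; apply: s. Qed.

Lemma nat_pairing : exists pi : nat * nat -> nat, injective pi.
Proof.
have := card_nat2; rewrite card_eq_le => /andP[le _].
have [pi [_ ipi]] := fun_of_le 0%N le.
by exists pi => p q; apply: ipi.
Qed.

Lemma PH_chain T (A : set T) (F : set (set ((T * T) * T))) :
  F `<=` PH A -> total_on F subset -> PH A (\bigcup_(X in F) X).
Proof.
move=> FP Ftot.
have DU x : DG (\bigcup_(X in F) X) x -> exists2 G, F G & DG G x.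
  by move=> [z [G FG Gz]]; exists G => //; exists z.
have UD G x : F G -> DG G x -> DG (\bigcup_(X in F) X) x.
  by move=> FG [z Gz]; exists z; exists G.
split.
- by move=> x /DU[G FG Gx]; have [+ _ _ _ _] := FP _ FG; apply.
- move=> [[x y] z] [G FG Gw]; have [_ + _ _ _] := FP _ FG.
  move=> /(_ _ Gw) [[/= Dx Dy] Dz]; split; [split|] => /=; exact: UD FG _.
- move=> p z z' [G1 FG1 G1z] [G2 FG2 G2z].
  case: (Ftot _ _ FG1 FG2) => sub.
  + by have [_ _ H _ _] := FP _ FG2; apply: (H p); [apply: sub|].
  + by have [_ _ H _ _] := FP _ FG1; apply: (H p); [|apply: sub].
- move=> p p' z [G1 FG1 G1z] [G2 FG2 G2z].
  case: (Ftot _ _ FG1 FG2) => sub.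
  + by have [_ _ _ H _] := FP _ FG2; apply: (H p p' z); [apply: sub|].
  + by have [_ _ _ H _] := FP _ FG1; apply: (H p p' z); [|apply: sub].
- split.
  + move=> x y /DU[G1 FG1 D1x] /DU[G2 FG2 D2y].
    case: (Ftot _ _ FG1 FG2) => sub.
    * have [_ _ _ _ [H _]] := FP _ FG2.
      have [z Gz] := H x y (DG_mono sub D1x) D2y.
      by exists z; exists G2.
    * have [_ _ _ _ [H _]] := FP _ FG1.
      have [z Gz] := H x y D1x (DG_mono sub D2y).
      by exists z; exists G1.
  + case: (pselect (exists2 G, F G & exists w, G w)) => [[G FG [w Gw]]|nG].
      right; have [_ _ _ _ [_ [G0|le]]] := FP _ FG.
        by move: Gw; rewrite G0.
      apply: (card_le_trans le); apply: subset_card_le => x Gx.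
      exact: UD FG Gx.
    left; apply/seteqP; split => // w [G FG Gw].
    by exfalso; apply: nG; exists G => //; exists w.
Qed.

Lemma PH_nonempty T (A : set T) : [set: nat] #<= A ->
  exists G, PH A G /\ exists w, G w.
Proof.
move=> hA; have [f0 [mf0 if0]] := le_funP (x := 0%N) hA I.
have [pi ipi] := nat_pairing.
pose G0 : set ((T * T) * T) :=
  [set w | exists i j, w = ((f0 i, f0 j), f0 (pi (i, j)))].
have DG0 x : DG G0 x <-> exists i, x = f0 i.
  split; first by move=> [z [i [j [e1 _ _]]]]; exists i.
  by move=> [i ->]; exists (f0 (pi (i, i))); exists i, i.
exists G0; split; last by exists ((f0 0%N, f0 0%N), f0 (pi (0%N, 0%N))); exists 0%N, 0%N.
split.
- by move=> x /DG0[i ->]; apply: mf0.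
- move=> _ [i [j ->]]; split; [split|] => /=; apply/DG0; eexists; reflexivity.
- move=> p z z' [i [j [-> ->]]] [i' [j' [e1 e2 ->]]].
  have ei := if0 _ _ I I e1; have ej := if0 _ _ I I e2.
  by rewrite ei ej.
- move=> p p' z [i [j [-> ->]]] [i' [j' [-> e]]].
  have := if0 _ _ I I e => /ipi [-> ->] //.
- split; last first.
    right; apply: (@le_of_fun _ _ _ _ f0) => //.
    by move=> i _; apply/DG0; exists i.
  by move=> x y /DG0[i ->] /DG0[j ->]; exists (f0 (pi (i, j))); exists i, j.
Qed.

Lemma hessenberg T (A : set T) : [set: nat] #<= A -> A `*` A #<= A.
Proof.
move=> hA.
have := @Zorn_bigcup ((T * T) * T) (PH A); case.
  by move=> F FP Ftot; apply: PH_chain.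
move=> M [PM Mmax].
have [MA MDD Mf Mi [Mt Minf]] := PM.
have {Minf} Minf : [set: nat] #<= DG M.
  case: Minf => // M0.
  have [G [PG [w Gw]]] := PH_nonempty hA.
  exfalso; apply: (Mmax G) => //; rewrite M0; split => //.
  by move=> /(_ w) /(_ Gw).
set D := DG M in MA MDD Mt Minf.
have [g [mg ig]] := le_funP (x := 0%N) Minf I.
set d1 := g 0%N; set d2 := g 1%N; set d3 := g 2%N.
have D1 : D d1 by apply: mg.
have D2 : D d2 by apply: mg.
have D3 : D d3 by apply: mg.
have d12 : d1 <> d2 by move=> /ig; move=> /(_ I I).
have d13 : d1 <> d3 by move=> /ig; move=> /(_ I I).
have d23 : d2 <> d3 by move=> /ig; move=> /(_ I I).
pose h (p : T * T) := if pselect (exists z, M (p, z)) is left e then projT1 (cid e) else d1.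
have hM x y : D x -> D y -> M ((x, y), h (x, y)).
  move=> Dx Dy; rewrite /h; case: pselect => [e|ne]; first exact: (projT2 (cid e)).
  by exfalso; apply: ne; apply: Mt.
have hD x y : D x -> D y -> D (h (x, y)).
  by move=> Dx Dy; have [_] := MDD _ (hM x y Dx Dy).
have hi x y x' y' : D x -> D y -> D x' -> D y' -> h (x, y) = h (x', y') -> x = x' /\ y = y'.
  move=> Dx Dy Dx' Dy' e.
  have := Mi _ _ _ (hM x y Dx Dy); rewrite e => /(_ _ (hM x' y' Dx' Dy')).
  by case=> -> ->.
suff AD : A #<= D.
  apply: (card_le_trans _ (subset_card_le MA)).
  have [a [ma ia]] := le_funP (x := d1) AD (MA _ D1).
  apply: (@le_of_fun _ _ _ _ (fun p => h (a p.1, a p.2))).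
    by move=> [x y] [/= Ax Ay]; apply: hD; apply: ma.
  move=> [x y] [x' y'] [/= Ax Ay] [/= Ax' Ay'] /hi [] //; try apply: ma => //.
  by move=> /ia -> // /ia ->.
case: (card_le_total (A `\` D) D) => [AD|DA].
  have [e [me ie]] := fun_of_le d1 AD.
  pose k x := if pselect (D x) then h (x, d1) else h (e x, d2).
  apply: (@le_of_fun _ _ _ _ k).
    move=> x Ax; rewrite /k; case: pselect => Dx; first exact: hD.
    by apply: hD => //; apply: me.
  move=> x y Ax Ay; rewrite /k; case: pselect => Dx; case: pselect => Dy.
  - by move/hi => /(_ Dx D1 Dy D1) [].
  - by move/hi => /(_ Dx D1 (me _ (conj Ay Dy)) D2) [_ /d12].
  - by move/hi => /(_ (me _ (conj Ax Dx)) D2 Dy D1) [_ /esym /d12].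
  - move/hi => /(_ (me _ (conj Ax Dx)) D2 (me _ (conj Ay Dy)) D2) [] + _.
    by apply: ie.
exfalso.
have [g' [mg' ig']] := fun_of_le d1 DA.
pose C := g' @` D.
have CA x : C x -> A x /\ ~ D x by move=> [d Dd <-]; apply: mg'.
pose u x := if pselect (exists2 d, D d & g' d = x) is left e then projT1 (cid2 e) else x.
have uC x : C x -> D (u x) /\ g' (u x) = x.
  move=> Cx; rewrite /u; case: pselect => [e|ne]; last by case: Cx => d Dd e; exfalso; apply: ne; exists d.
  by case: (cid2 e).
have uD x : D x -> u x = x.
  move=> Dx; rewrite /u; case: pselect => [e|//].
  by case: (cid2 e) => d Dd gd /=; exfalso; have [_] := CA x (ex_intro2 _ _ d Dd gd).
pose tag (p : T * T) := if pselect (C p.1) then (if pselect (C p.2) then d3 else d1) else d2.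
pose N := [set p : T * T | (D p.1 \/ C p.1) /\ (D p.2 \/ C p.2) /\ ~ (D p.1 /\ D p.2)].
pose k (p : T * T) := g' (h (tag p, h (u p.1, u p.2))).
have uDC x : D x \/ C x -> D (u x).
  by case=> [Dx|Cx]; [rewrite uD|have [] := uC x Cx].
have tagD p : D (tag p) by rewrite /tag; do 2 case: pselect.
have kC p : N p -> C (k p).
  move=> [N1 [N2 _]]; exists (h (tag p, h (u p.1, u p.2))) => //.
  by apply: (hD) => //; apply: (hD); apply: uDC.
pose G' := M `|` [set w | N w.1 /\ w.2 = k w.1].
have MD w : M w -> (D w.1.1 /\ D w.1.2) /\ D w.2.
  by move=> Mw; have := MDD _ Mw; case: w Mw => [[x y] z].
have CnD x : C x -> ~ D x by move=> /CA[].
have DG' x : DG G' x <-> D x \/ C x.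
  split.
  - move=> [z [Mw|[[N1 _] _]]]; first by left; exists z.
    by case: N1 => /= ?; [left|right].
  - case=> [[z Mz]|Cx]; first by exists z; left.
    exists (k (x, x)); right; split => //=; split; first by right.
    by split; [right|move=> [/CnD]].
have repr x : D x \/ C x -> x = if pselect (C x) then g' (u x) else u x.
  move=> hx; case: pselect => [Cx|nCx]; first by have [] := uC x Cx.
  by case: hx => // Dx; rewrite uD.
have tagN p : N p -> (C p.1 <-> tag p = d3 \/ tag p = d1) /\ (C p.2 <-> tag p = d3 \/ tag p = d2).
  move=> [N1 [N2 N3]]; rewrite /tag.
  case: pselect => C1; case: pselect => C2 /=.
  - by split; split => // _; [left|left].
  - split; split => //; first by right.
    by case => // /esym.
  - split; split => //; first by case => // /esym.
    by right.
  - exfalso; apply: N3; split.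
    + by case: N1.
    + by case: N2.
have kinj p p' : N p -> N p' -> k p = k p' -> p = p'.
  case: p => x y; case: p' => x' y' Np Np'.
  have [[/= N1 [/= N2 _]] [/= N1' [/= N2' _]]] := (Np, Np').
  move=> /ig'; move=> /(_ (hD _ _ (tagD _) (hD _ _ (uDC _ N1) (uDC _ N2)))).
  move=> /(_ (hD _ _ (tagD _) (hD _ _ (uDC _ N1') (uDC _ N2')))).
  move=> /hi [] //; try (apply: (hD); apply: uDC => //).
  move=> et /hi [] //; try apply: uDC => //.
  move=> e1 e2.
  have [[c1 c1'] [c2 c2']] := tagN _ Np; have [[c1p c1p'] [c2p c2p']] := tagN _ Np'.
  rewrite /= in c1 c1' c2 c2' c1p c1p' c2p c2p'.
  have E1 : C x <-> C x'.
    by split => [/c1 hh|/c1p hh]; [apply: c1p'; rewrite -et|apply: c1'; rewrite et].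
  have E2 : C y <-> C y'.
    by split => [/c2 hh|/c2p hh]; [apply: c2p'; rewrite -et|apply: c2'; rewrite et].
  have ex : x = x'.
    rewrite (repr x N1) (repr x' N1') e1.
    case: pselect => cx; case: pselect => cx' //; exfalso.
    + by apply: cx'; apply: (proj1 E1).
    + by apply: cx; apply: (proj2 E1).
  have ey : y = y'.
    rewrite (repr y N2) (repr y' N2') e2.
    case: pselect => cy; case: pselect => cy' //; exfalso.
    + by apply: cy'; apply: (proj1 E2).
    + by apply: cy; apply: (proj2 E2).
  by rewrite ex ey.
have Nn p : N p -> ~ (D p.1 /\ D p.2) by case=> _ [].
have c0 : C (g' d1) by exists d1.
have Nc : N (g' d1, g' d1).
  by split; [right|split; [right|move=> [/= /(CnD _ c0)]]].
apply: (Mmax G'); first split.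
- by move=> w Mw; left.
- move=> /(_ ((g' d1, g' d1), k (g' d1, g' d1))) /(_ (or_intror (conj Nc erefl))).
  by move=> /MD [[/= /(CnD _ c0)]].
split.
- by move=> x /DG'[/MA|/CA[]].
- move=> [[x y] z] [Mw|[/= Nw ->]].
    have [[/= Dx Dy] Dz] := MD _ Mw.
    by split; [split|] => /=; apply/DG'; left.
  have [N1 [N2 _]] := Nw.
  by split; [split|] => /=; apply/DG'; [|  |right; apply: kC].
- move=> p z z' [Mw|[/= Nw ->]] [Mw'|[/= Nw' ->]] //.
  + exact: Mf Mw Mw'.
  + by exfalso; apply: (Nn _ Nw'); have [] := MD _ Mw.
  + by exfalso; apply: (Nn _ Nw); have [] := MD _ Mw'.
- move=> p p' z [Mw|[/= Nw ez]] [Mw'|[/= Nw' ez']].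
  + exact: Mi Mw Mw'.
  + by exfalso; have [_ /= Dz] := MD _ Mw; apply: (CnD z) => //; rewrite ez'; apply: kC.
  + by exfalso; have [_ /= Dz] := MD _ Mw'; apply: (CnD z) => //; rewrite ez; apply: kC.
  + by apply: kinj => //; rewrite -ez -ez'.
- split; last first.
    right; apply: (card_le_trans Minf); apply: subset_card_le => x Dx.
    by apply/DG'; left.
  move=> x y /DG' hx /DG' hy.
  case: (pselect (D x /\ D y)) => [[Dx Dy]|nD].
    by have [z Mz] := Mt x y Dx Dy; exists z; left.
  by exists (k (x, y)); right; split.
Qed.

Definition infset T (A : set T) := [set: nat] #<= A.

Lemma inf_point T (A : set T) : infset A -> exists a, A a.
Proof. by move=> h; have [a Aa] := le_nonempty h (I : [set: nat] 0%N); exists a. Qed.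

Lemma inf_le T U (A : set T) (B : set U) : infset A -> A #<= B -> infset B.
Proof. by move=> h l; apply: card_le_trans l. Qed.

Lemma le_prod T U V (A : set T) (B : set U) (C : set V) :
  infset A -> B #<= A -> C #<= A -> B `*` C #<= A.
Proof.
move=> iA lB lC; have [a0 _] := inf_point iA.
apply: card_le_trans (hessenberg iA).
have [f [mf jf]] := fun_of_le a0 lB; have [g [mg jg]] := fun_of_le a0 lC.
apply: (@le_of_fun _ _ _ _ (fun p => (f p.1, g p.2))).
  by move=> [x y] [/= Bx Cy]; split; [apply: mf|apply: mg].
move=> [x y] [x' y'] [/= Bx Cy] [/= Bx' Cy'] [/jf e1 /jg e2].
by rewrite e1 // e2.
Qed.

Lemma le_bigcup I T U (D : set I) (F : I -> set T) (A : set U) :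
  infset A -> D #<= A -> (forall i, D i -> F i #<= A) -> \bigcup_(i in D) F i #<= A.
Proof.
move=> iA lD lF; have [a0 _] := inf_point iA.
apply: card_le_trans (hessenberg iA).
have [d [md jd]] := fun_of_le a0 lD.
pose phi i : T -> U := if pselect (D i) is left h then projT1 (cid (fun_of_le a0 (lF i h))) else fun _ => a0.
have phiP i : D i -> maps (F i) A (phi i) /\ injon (F i) (phi i).
  by move=> Di; rewrite /phi; case: pselect => // h; case: (cid _).
pose psi x := if pselect (exists2 i, D i & F i x) is left h
  then (d (projT1 (cid2 h)), phi (projT1 (cid2 h)) x) else (a0, a0).
have psiE x i : D i -> F i x -> exists2 j, (D j /\ F j x) & psi x = (d j, phi j x).
  move=> Di Fix; rewrite /psi; case: pselect => [h|nh]; last by exfalso; apply: nh; exists i.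
  by case: (cid2 h) => j Dj Fjx /=; exists j.
apply: (@le_of_fun _ _ _ _ psi).
  move=> x [i Di Fix]; have [j [Dj Fjx] ->] := psiE x i Di Fix.
  by split; [apply: md|have [+ _] := phiP j Dj; apply].
move=> x y [i Di Fix] [i' Di' Fiy].
have [j [Dj Fjx] ->] := psiE x i Di Fix; have [j' [Dj' Fjy] ->] := psiE y i' Di' Fiy.
case=> /jd ejj; rewrite -(ejj Dj Dj') in Fjy *.
by have [_ +] := phiP j Dj; apply.
Qed.

Lemma countable_le T U (B : set T) (A : set U) : countable B -> infset A -> B #<= A.
Proof. by move=> cB iA; apply: card_le_trans iA. Qed.

Lemma le_union T U (B C : set T) (A : set U) :
  infset A -> B #<= A -> C #<= A -> B `|` C #<= A.
Proof.
move=> iA lB lC.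
have -> : B `|` C = \bigcup_(b in [set: bool]) (if b then B else C).
  apply/seteqP; split => x.
    by case=> h; [exists true|exists false].
  by move=> [[] _ h]; [left|right].
apply: le_bigcup => //; first exact: countable_le (countableP _) iA.
by move=> [] _.
Qed.

Lemma le_set1 T U (x : T) (A : set U) : infset A -> [set x] #<= A.
Proof. by move=> iA; apply: countable_le iA; apply/finite_set_countable/finite_set1. Qed.

Lemma wo_least (V : eqType) (R : rel V) (Q : set V) : well_order R ->
  (exists x, Q x) -> exists m, Q m /\ forall y, Q y -> R m y.
Proof.
move=> wo [x Qx].
have [|m [[/asboolP Qm lb] _]] := wo [pred z | `[< Q z >]].
  by exists x; apply/asboolP.
exists m; split => // y Qy; apply: lb; exact/asboolP.
Qed.

Lemma wo_refl (V : eqType) (R : rel V) x : well_order R -> R x x.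
Proof.
move=> wo; have [m [-> ]] := wo_least (Q := [set x]) wo (ex_intro _ x erefl).
by apply.
Qed.

Lemma wo_total (V : eqType) (R : rel V) x y : well_order R -> R x y \/ R y x.
Proof.
move=> wo; have [m [hm lb]] := wo_least (Q := [set x; y]) wo (ex_intro _ x (or_introl erefl)).
by case: hm => <-; [left; apply: lb; right|right; apply: lb; left].
Qed.

Lemma wo_anti (V : eqType) (R : rel V) x y : well_order R -> R x y -> R y x -> x = y.
Proof.
move=> wo Rxy Ryx.
have [|z [_ uz]] := wo [pred w | (w == x) || (w == y)].
  by exists x; rewrite inE eqxx.
have mx : minimum_of R [pred w | (w == x) || (w == y)] x.
  split; first by rewrite inE eqxx.
  by move=> w; rewrite inE => /orP[/eqP->|/eqP->] //; apply: wo_refl.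
have my : minimum_of R [pred w | (w == x) || (w == y)] y.
  split; first by rewrite inE eqxx orbT.
  by move=> w; rewrite inE => /orP[/eqP->|/eqP->] //; apply: wo_refl.
by rewrite -(uz _ mx) -(uz _ my).
Qed.

Lemma seg_exists (V : eqType) (R : rel V) W (Y : set V) (T : set W) :
  well_order R -> infset T -> ~ (Y #<= T) ->
  exists P, [/\ P `<=` Y, ~ (P #<= T) & forall y, P y -> [set z | P z /\ R z y] #<= T].
Proof.
move=> wo iT nY.
pose Q := [set x | Y x /\ ~ ([set z | Y z /\ R z x /\ z <> x] #<= T)].
have segle y : Y y -> ~ Q y -> [set z | Y z /\ R z y] #<= T.
  move=> Yy nQ.
  have sl : [set z | Y z /\ R z y /\ z <> y] #<= T.
    by apply: contra_notP nQ => h; split.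
  apply: card_le_trans (le_union iT sl (le_set1 y iT)).
  apply: subset_card_le => z [Yz Rzy].
  by case: (pselect (z = y)) => e; [right|left].
case: (pselect (exists x, Q x)) => [hQ|nQ].
  have [x [[Yx nx] mx]] := wo_least wo hQ.
  exists [set z | Y z /\ R z x /\ z <> x]; split => //.
    by move=> z [].
  move=> y [Yy [Ryx nyx]].
  apply: card_le_trans (segle y Yy _).
    by apply: subset_card_le => z [[Yz _] Rzy].
  by move=> Qy; apply: nyx; apply: wo_anti wo Ryx (mx y Qy).
exists Y; split => // y Yy.
by apply: segle => // Qy; apply: nQ; exists y.
Qed.

Lemma seg_cof (V : eqType) (R : rel V) W (P Rs : set V) (T : set W) :
  well_order R -> infset T -> (forall y, P y -> [set z | P z /\ R z y] #<= T) ->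
  Rs `<=` P -> ~ (Rs #<= T) -> P #<= Rs `*` T.
Proof.
move=> wo iT segT sR nR; have [t0 _] := inf_point iT.
have up p : P p -> exists r, Rs r /\ R p r.
  move=> Pp; apply: contra_notP nR => nr.
  apply: card_le_trans (segT p Pp); apply: subset_card_le => r Rr.
  split; first exact: sR.
  case: (wo_total r p wo) => // Rpr; exfalso; apply: nr; exists r; split.
  by [] . by [].
pose rp p := if pselect (exists r, Rs r /\ R p r) is left h then projT1 (cid h) else p.
have rpP p : P p -> Rs (rp p) /\ R p (rp p).
  move=> Pp; rewrite /rp; case: pselect => [h|nh]; first exact: (projT2 (cid h)).
  by exfalso; apply: nh; apply: up.
pose g r : V -> W := if pselect (P r) is left h then projT1 (cid (fun_of_le t0 (segT r h))) else fun _ => t0.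
have gP r : P r -> maps [set z | P z /\ R z r] T (g r) /\ injon [set z | P z /\ R z r] (g r).
  by move=> Pr; rewrite /g; case: pselect => // h; case: (cid _).
apply: (@le_of_fun _ _ _ _ (fun p => (rp p, g (rp p) p))).
  move=> p Pp; have [Rr Rpr] := rpP p Pp; split => //=.
  by have [+ _] := gP _ (sR _ Rr); apply; split.
move=> p q Pp Pq [e1 e2].
have [Rr Rpr] := rpP p Pp; have [Rq Rqr] := rpP q Pq.
rewrite -e1 in e2 Rqr.
have [_ ij] := gP _ (sR _ Rr); apply: ij e2; split => //.
Qed.

Lemma seg_rob (V : eqType) (R : rel V) W (P Rs : set V) (T : set W) :
  well_order R -> infset T -> (forall y, P y -> [set z | P z /\ R z y] #<= T) ->
  Rs `<=` P -> ~ (Rs #<= T) -> P #<= Rs.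
Proof.
move=> wo iT segT sR nR.
have TR : T #<= Rs by case: (card_le_total Rs T).
have iR : infset Rs := inf_le iT TR.
apply: card_le_trans (seg_cof wo iT segT sR nR) _.
exact: le_prod iR (card_lexx _) TR.
Qed.

Lemma uncount_inf T (A : set T) : ~ countable A -> infset A.
Proof. by move=> nA; case: (card_le_total A [set: nat]). Qed.

Lemma uncount_point T (A : set T) : ~ countable A -> exists a, A a.
Proof. by move/uncount_inf/inf_point. Qed.

Lemma W1_exists (V : eqType) (S : set V) : ~ countable S ->
  exists W, [/\ W `<=` S, ~ countable W &
    forall U (B : set U), ~ countable B -> W #<= B].
Proof.
move=> nS; have [R wo] := well_ordering_principle V.
have [P [PS nP segP]] := seg_exists wo (card_lexx [set: nat]) nS.
exists P; split => // U B nB.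
case: (card_le_total P B) => // BP.
have [p0 Pp0] := uncount_point nP.
have [phi [mphi iphi]] := fun_of_le p0 BP.
have sR : phi @` B `<=` P by move=> _ [b Bb <-]; apply: mphi.
have nR : ~ (phi @` B #<= [set: nat]).
  move=> h; apply: nB; apply: card_le_trans h.
  by apply: (@le_of_fun _ _ _ _ phi) => // b Bb; exists b.
apply: card_le_trans (seg_rob wo (card_lexx _) segP sR nR) _.
exact: card_image_le.
Qed.

Definition robust (V : Type) G (W : set V) (P : set V) :=
  forall (B : set G) (F : G -> set V), B #<= W -> P `<=` \bigcup_(a in B) F a ->
    exists2 a, B a & P #<= F a.

Lemma bad_countable (V : Type) G (S : set V) (Z : G -> set V) (W : set V) (P : set V) :
  (forall s, S s -> countable [set a | ~ Z a s]) ->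
  ~ countable W -> (forall U (B : set U), ~ countable B -> W #<= B) ->
  P `<=` S -> robust G W P ->
  countable [set a | ~ (P #<= S `&` Z a)].
Proof.
move=> cZ nW W1 PS rP.
case: (pselect (countable [set a | ~ (P #<= S `&` Z a)])) => // nb; exfalso.
have [a0 _] := uncount_point nb.
have [phi [mphi iphi]] := fun_of_le a0 (W1 _ _ nb).
set B := phi @` W.
have BW : B #<= W by exact: card_image_le.
have WB : W #<= B by apply: (@le_of_fun _ _ _ _ phi) => // w Ww; exists w.
have nB : ~ countable B by move=> cB; apply: nW; apply: card_le_trans cB.
have [|a Ba Pa] := rP B (fun a => S `&` Z a) BW.
  move=> p Pp; apply: contra_notP nB => np.
  apply: card_le_trans (cZ p (PS p Pp)); apply: subset_card_le => a Ba Zap.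
  by apply: np; exists a => //; split => //; apply: PS.
by case: Ba => w Ww ea; move: (mphi w Ww); rewrite ea.
Qed.

Lemma core (V : eqType) G (S : set V) (Z : G -> set V) (W : set V) :
  (forall s, S s -> countable [set a | ~ Z a s]) ->
  W `<=` S -> ~ countable W -> (forall U (B : set U), ~ countable B -> W #<= B) ->
  ~ (S #<= W) -> ~ ([set: G] #<= W) ->
  exists a, S #<= S `&` Z a.
Proof.
move=> cZ WS nW W1 nSW nGW.
have iW : infset W := uncount_inf nW.
have [w0 Ww0] := inf_point iW.
have nG : ~ countable [set: G] by move=> cG; apply: nGW; apply: countable_le.
case: (pselect (robust G W S)) => [rS|].
  have cb := bad_countable cZ nW W1 (@subset_refl _ S) rS.
  have [a na] : exists a, ~ [set a | ~ (S #<= S `&` Z a)] a.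
    apply: contra_notP nG => h; apply: card_le_trans cb; apply: subset_card_le => a _.
    by apply: contra_notP h => h'; exists a.
  by exists a; apply: contra_notP na.
move=> /existsNP[B /existsNP[F /not_implyP[BW /not_implyP[cov nex]]]].
have nFb b : B b -> ~ (S #<= F b) by move=> Bb h; apply: nex; exists b.
pose Tb b := (F b `&` S) `|` W.
have iTb b : infset (Tb b).
  by apply: (@inf_le _ _ W (Tb b) iW); apply: subset_card_le => w Ww; right.
have nSTb b : B b -> ~ (S #<= Tb b).
  move=> Bb h; case: (card_le_total W (F b `&` S)) => le.
  - have iF : infset (F b `&` S) := inf_le iW le.
    apply: (nFb b Bb); apply: card_le_trans h _.
    apply: card_le_trans (le_union iF (card_lexx _) le) _.
    by apply: subset_card_le => x [].
  - apply: nSW; apply: card_le_trans h _.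
    exact: le_union iW le (card_lexx _).
have [R wo] := well_ordering_principle V.
have Pex b : exists P, B b -> [/\ P `<=` S, ~ (P #<= Tb b) &
      forall y, P y -> [set z | P z /\ R z y] #<= Tb b].
  case: (pselect (B b)) => Bb; last by exists set0.
  have [P hP] := seg_exists wo (iTb b) (nSTb b Bb).
  by exists P.
pose Pb b := projT1 (cid (Pex b)).
have PbP b : B b -> [/\ Pb b `<=` S, ~ (Pb b #<= Tb b) &
      forall y, Pb b y -> [set z | Pb b z /\ R z y] #<= Tb b].
  by move=> Bb; rewrite /Pb; case: (cid _) => P /= /(_ Bb).
have rPb b : B b -> robust G W (Pb b).
  move=> Bb B' F' B'W cov'; have [PS nP segP] := PbP b Bb.
  case: (pselect (exists2 a, B' a & ~ (F' a `&` Pb b #<= Tb b))) => [[a B'a na]|nall].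
    exists a => //.
    apply: card_le_trans (seg_rob wo (iTb b) segP (@subIsetr _ _ _) na) _.
    by apply: subset_card_le => x [].
  exfalso; apply: nP.
  have le1 : Pb b #<= \bigcup_(a in B') (F' a `&` Pb b).
    apply: subset_card_le => x Px; have [a B'a F'x] := cov' x Px; by exists a.
  apply: (card_le_trans le1); apply: le_bigcup => //.
  - apply: card_le_trans B'W _; apply: subset_card_le => w Ww; by right.
  - by move=> a B'a; apply: contra_notP nall => h; exists a.
set U := \bigcup_(b in B) [set a | ~ (Pb b #<= S `&` Z a)].
have UW : U #<= W.
  apply: le_bigcup => // b Bb; apply: countable_le iW.
  have [PS _ _] := PbP b Bb.
  exact: bad_countable cZ nW W1 PS (rPb b Bb).
have [a na] : exists a, ~ U a.
  apply: contra_notP nGW => h; apply: card_le_trans UW; apply: subset_card_le => a _.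
  by apply: contra_notP h => h'; exists a.
exists a.
have PZ b : B b -> Pb b #<= S `&` Z a.
  by move=> Bb; apply: contra_notP na => h; exists b.
have TZ b : B b -> Tb b #<= S `&` Z a.
  move=> Bb; case: (card_le_total (Tb b) (S `&` Z a)) => // le.
  by have [_ nP _] := PbP b Bb; exfalso; apply: nP; apply: card_le_trans (PZ b Bb) le.
case: (empty_or B) => [B0|[b0 Bb0]].
  by exfalso; have [x Sx] := uncount_point (fun c => nW (card_le_trans (subset_card_le WS) c)); have := cov x Sx; rewrite B0 => -[].
have WZ : W #<= S `&` Z a.
  by apply: card_le_trans (TZ b0 Bb0); apply: subset_card_le => w Ww; right.
have iZ := inf_le iW WZ.
have le1 : S #<= \bigcup_(b in B) (F b `&` S).
  apply: subset_card_le => x Sx; have [b Bb Fbx] := cov x Sx; exists b => //.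
apply: (card_le_trans le1); apply: le_bigcup => //.
- exact: card_le_trans BW WZ.
- move=> b Bb; apply: card_le_trans (TZ b Bb); apply: subset_card_le => x Fx; by left.
Qed.

Local Open Scope ring_scope.

Lemma natSinv (R : realType) (e : R) : 0 < e -> exists n : nat, n.+1%:R^-1 < e.
Proof.
move=> e0; exists (Num.truncn e^-1).
rewrite invf_plt ?posrE ?ltr0Sn //.
exact: truncnS_gt.
Qed.

Lemma dual0 (R : realType) (X : normedModType R) (g : X -> R) :
  is_dual_elt g -> g 0 = 0.
Proof. by case=> _ hZ _; rewrite -(scale0r (0 : X)) hZ mul0r. Qed.

Lemma dual_sum (R : realType) (X : normedModType R) (g : X -> R) n
  (c : 'I_n -> R) (v : 'I_n -> X) :
  is_dual_elt g -> g (\sum_(i < n) c i *: v i) = \sum_(i < n) c i * g (v i).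
Proof.
move=> gd; have [hD hZ _] := gd.
elim: n c v => [|n IH] c v; first by rewrite !big_ord0 dual0.
by rewrite !big_ord_recr /= hD hZ IH.
Qed.

Lemma near_nz (R : realType) (X : normedModType R) (g : X -> R) p :
  is_dual_elt g -> g p != 0 -> nbhs p [set y | g y != 0].
Proof.
move=> [_ _ gc] gp; rewrite /continuous_at in gc.
have gp' : 0 < `|g p| by rewrite normr_gt0.
move: (gc p) => /cvgr_dist_lt /(_ _ gp').
apply: filterS => t /=; apply: contraTneq => ->.
by rewrite subr0 ltxx.
Qed.

Lemma lspan_supp (R : realType) (X : normedModType R) G (x : G -> X) (f : G -> X -> R) y :
  (forall a, is_dual_elt (f a)) -> (forall a b, f a (x b) = if `[< a = b >] then 1 else 0) ->
  lspan (range x) y -> exists kw : {k : nat & 'I_k -> G},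
    forall a, f a y != 0 -> exists i, a = projT2 kw i.
Proof.
move=> fd bi [k [c [v [hv ->]]]].
pose w i := projT1 (cid2 (hv i)).
have wE i : x (w i) = v i by rewrite /w; case: (cid2 _).
exists (existT _ k w) => a /=; rewrite dual_sum //.
apply: contraNP => na; apply/eqP; apply: big1 => i _.
by rewrite -wE bi; case: asboolP => [e|_]; [exfalso; apply: na; exists i|rewrite mulr0].
Qed.

Lemma supp_countable (R : realType) (X : normedModType R) G (x : G -> X) (f : G -> X -> R) s :
  (forall a, is_dual_elt (f a)) -> (forall a b, f a (x b) = if `[< a = b >] then 1 else 0) ->
  closure (lspan (range x)) s -> countable [set a | f a s <> 0].
Proof.
move=> fd bi cs.
have H n : exists kw : {k : nat & 'I_k -> G}, exists y, ball s (n.+1%:R^-1) y /\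
    forall a, f a y != 0 -> exists i, a = projT2 kw i.
  have ep : 0 < (n.+1%:R : R)^-1 by rewrite invr_gt0 ltr0Sn.
  have [y [ly By]] := cs _ (nbhsx_ballx s _ ep).
  have [kw hkw] := lspan_supp fd bi ly.
  by exists kw, y.
pose kw n := projT1 (cid (H n)).
have kwP n : exists y, ball s (n.+1%:R^-1) y /\
    forall a, f a y != 0 -> exists i, a = projT2 (kw n) i.
  by rewrite /kw; case: (cid _).
apply: (@sub_countable _ _ _ (\bigcup_(n in [set: nat]) range (projT2 (kw n)))).
  apply: subset_card_le => a /eqP fa.
  move: (near_nz (fd a) fa) => /nbhs_ballP[e e0 sub].
  have [n hn] := natSinv e0.
  have [y [By hy]] := kwP n.
  have /hy [i ->] : f a y != 0.
    by apply: (sub y); apply: (le_ball (ltW hn)).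
  by exists n => //; exists i.
apply: bigcup_countable; first exact: countableP.
move=> n _; apply: card_le_trans (card_image_le _ _) _.
exact: countableP.
Qed.

Lemma not_lin_dense (R : realType) (X : normedModType R) (g : X -> R) p (L : set X) :
  is_dual_elt g -> g p = 1 -> (forall l, L l -> g l = 0) -> ~ linearly_dense L.
Proof.
move=> gd gp gL ld.
have cp : closure (lspan L) p by rewrite ld.
have gp0 : g p != 0 by rewrite gp oner_neq0.
have [y [[k [c [v [hv ->]]]] /= ny]] := cp _ (near_nz gd gp0).
move: ny; rewrite dual_sum //; apply/negP; rewrite negbK.
by apply/eqP; apply: big1 => i _; rewrite gL ?mulr0.
Qed.

Fixpoint Dn (R : realType) (X : normedModType R) G (x : G -> X) (n : nat) : set X :=
  if n is n'.+1 then [set y | exists d a (q : rat), Dn x n' d /\ y = d + ratr q *: x a]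
  else [set 0].

Lemma Dn_le (R : realType) (X : normedModType R) G (x : G -> X) V (W : set V) :
  infset W -> [set: G] #<= W -> forall n, Dn x n #<= W.
Proof.
move=> iW GW; elim=> [|n IH] /=; first exact: le_set1.
have ratW : [set: rat] #<= W.
  by apply: countable_le iW; move: card_rat; rewrite card_eq_le => /andP[].
pose phi (z : X * (G * rat)) := z.1 + ratr z.2.2 *: x z.2.1.
apply: (@card_le_trans _ _ _ (Dn x n `*` ([set: G] `*` [set: rat]))).
  apply: card_le_trans (card_image_le phi _).
  by apply: subset_card_le => y [d [a [q [Dd ->]]]]; exists (d, (a, q)).
by apply: le_prod => //; apply: le_prod.
Qed.

Lemma rat_approx (R : realType) (c d : R) : 0 < d -> exists q : rat, `|c - ratr q| < d.
Proof.
move=> d0; have cd : c < c + d by rewrite ltrDl.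
have [q] := @rat_in_itvoo R c (c + d) cd.
rewrite in_itv /= => /andP[h1 h2]; exists q.
rewrite ltr_distl; apply/andP; split.
  by rewrite ltrBlDr.
by rewrite (lt_trans h1) // ltrDl.
Qed.

Lemma approx (R : realType) (X : normedModType R) G (x : G -> X) k
  (c : 'I_k -> R) (w : 'I_k -> G) (e : R) : 0 < e ->
  exists2 d, Dn x k d & `|\sum_(i < k) c i *: x (w i) - d| < e.
Proof.
elim: k c w e => [|k IH] c w e e0.
  by exists 0 => //=; rewrite big_ord0 subr0 normr0.
have e2 : 0 < e / 2 by rewrite divr_gt0.
have [d Dd hd] := IH (fun i => c (widen_ord (leqnSn k) i)) (fun i => w (widen_ord (leqnSn k) i)) _ e2.
set xw := x (w ord_max).
have n1 : 0 < `|xw| + 1 by rewrite ltr_wpDl.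
have [q hq] := rat_approx (c ord_max) (divr_gt0 e2 n1).
exists (d + ratr q *: xw); first by exists d, (w ord_max), q.
rewrite big_ord_recr /=.
set s := \sum_(i < k) _.
have -> : s + c ord_max *: xw - (d + ratr q *: xw) = (s - d) + (c ord_max - ratr q) *: xw.
  by rewrite scalerBl; rewrite opprD !addrA; congr (_ + _); rewrite -!addrA; congr (_ + _); rewrite addrC.
apply: (le_lt_trans (ler_normD _ _)).
rewrite (splitr e) ltrD //.
rewrite normrZ.
have := hq; rewrite ltr_pdivlMr // => h.
apply: le_lt_trans h.
by rewrite ler_wpM2l // lerDl.
Qed.

Lemma D_dense (R : realType) (X : normedModType R) G (x : G -> X) :
  linearly_dense (range x) -> dense (\bigcup_(n in [set: nat]) Dn x n).
Proof.
move=> ld O [p Op] oO.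
have : nbhs p O by move: oO; rewrite openE => /(_ _ Op).
move=> /nbhs_ballP[e e0 sub].
have e2 : 0 < e / 2 by rewrite divr_gt0.
have cp : closure (lspan (range x)) p by rewrite ld.
have [y [[k [c [v [hv ->]]]] By]] := cp _ (nbhsx_ballx p _ e2).
pose w i := projT1 (cid2 (hv i)).
have wE i : x (w i) = v i by rewrite /w; case: (cid2 _).
have sE : \sum_(i < k) c i *: v i = \sum_(i < k) c i *: x (w i).
  by apply: eq_bigr => i _; rewrite wE.
rewrite sE in By.
have [d Dd hd] := approx x c w e2.
exists d; split; last by exists k.
apply: sub; rewrite -ball_normE /=.
move: By; rewrite -ball_normE /= => By.
set s := \sum_(i < k) _ in By hd.
have -> : p - d = (p - s) + (s - d) by rewrite addrA subrK.
apply: (le_lt_trans (ler_normD _ _)).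
by rewrite (splitr e) ltrD.
Qed.

Theorem theorem3p6 (R : realType) (X : completeNormedModType R) :
  dens_ge_omega2 X ->
  has_fundamental_biorthogonal_system X ->
  forall S : set X, ~ overcomplete S.
Proof.
move=> dens [G [x [f [fd bi ld]]]] S [[[D0 [dD0 SD0]] Sle] oc].
have D0S : D0 #<= S by move: SD0; rewrite card_eq_le => /andP[].
have SD0' : S #<= D0 by move: SD0; rewrite card_eq_le => /andP[].
have nS : ~ countable S.
  move=> cS; apply: (dens D0 dD0) => U B nB.
  apply: countable_le (uncount_inf nB).
  exact: card_le_trans D0S cS.
have [W [WS nW W1]] := W1_exists nS.
have iW : infset W := uncount_inf nW.
have nDW (D : set X) : dense D -> ~ (D #<= W).
  by move=> dD DW; apply: (dens D dD) => U B nB; apply: card_le_trans DW (W1 _ _ nB).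
have nSW : ~ (S #<= W) by move=> SW; apply: (nDW D0 dD0); apply: card_le_trans D0S SW.
have nGW : ~ ([set: G] #<= W).
  move=> GW; apply: (nDW _ (D_dense ld)).
  by apply: le_bigcup => // n _; apply: Dn_le.
pose Z a := [set s : X | f a s = 0].
have cZ s : S s -> countable [set a | ~ Z a s].
  by move=> _; apply: supp_countable fd bi _; rewrite ld.
have [a SZ] := core cZ WS nW W1 nSW nGW.
have LS : S `&` Z a `<=` S by move=> ? [].
have LeS : S `&` Z a #= S.
  by apply: Cantor_Bernstein => //; apply: subset_card_le.
have := oc _ LS LeS.
apply: (@not_lin_dense _ _ (f a) (x a)) => //.
  by rewrite bi; case: asboolP.
by move=> l [].
Qed.
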